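(* Let $\mathcal{C}=(V,\mathcal{R})$ be a coherent configuration and let $X,Y$ be fibers of $\mathcal{C}$ such that $|X|=|Y|$ is a prime. Then $|\mathcal{R}_{X,Y}|\in\{1,|\mathcal{R}_X|\}$. Furthermore, if $|\mathcal{R}_{X,Y}|>1$, then $|\mathcal{R}_{X,Y}|=|\mathcal{R}_X|=|\mathcal{R}_Y|$.
   Context: A coherent configuration is a pair $\mathcal{C}=(V,\mathcal{R})$ where $V$ is a finite set and $\mathcal{R}$ is a partition of $V\times V$ into nonempty sets such that: (1) the diagonal $\Delta_V$ is a union of members of $\mathcal{R}$; (2) for each $R\in\mathcal{R}$ its transpose $R^t=\{(u,v)\mid (v,u)\in R\}$ belongs to $\mathcal{R}$; (3) for all $R,S,T\in\mathcal{R}$ there is a constant $c_{RS}^T$ with $c_{RS}^T=|R(u)\cap S^t(v)|$ for all $(u,v)\in T$, where $T(w)=\{z\in V\mid (w,z)\in T\}$. A subset $X\subseteq V$ is a fiber if $\Delta_X=\{(x,x)\mid x\in X\}\in\mathcal{R}$. For fibers $X,Y$, $\mathcal{R}_{X,Y}=\{R\in\mathcal{R}\mid R\subseteq X\times Y\}$ and $\mathcal{R}_X=\mathcal{R}_{X,X}$. *)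

(* Defs.v *)
From mathcomp Require Import all_boot.
Set Implicit Arguments. Unset Strict Implicit. Unset Printing Implicit Defensive.

Definition diagonal (V : finType) (X : {set V}) : {set V * V} :=
  [set (x, x) | x in X].

Definition transpose (V : finType) (R : {set V * V}) : {set V * V} :=
  [set p | (p.2, p.1) \in R].

Definition nbhd (V : finType) (T : {set V * V}) (w : V) : {set V} :=
  [set z | (w, z) \in T].

Definition coherent_configuration (V : finType) (Rel : {set {set V * V}}) : Prop :=
  [/\ partition Rel [set: V * V],
      (exists2 D : {set {set V * V}}, D \subset Rel & cover D = diagonal [set: V]),
      (forall R, R \in Rel -> transpose R \in Rel) &
      (forall R S T, R \in Rel -> S \in Rel -> T \in Rel ->
         exists c : nat, forall u v, (u, v) \in T ->
           #|nbhd R u :&: nbhd (transpose S) v| = c)].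

Definition is_fiber (V : finType) (Rel : {set {set V * V}}) (X : {set V}) : Prop :=
  diagonal X \in Rel.

Definition rels_between (V : finType) (Rel : {set {set V * V}}) (X Y : {set V})
  : {set {set V * V}} :=
  [set R in Rel | R \subset setX X Y].

(* Main.v *)
Require Import Defs.
From mathcomp Require Import all_boot all_algebra.
Set Implicit Arguments. Unset Strict Implicit. Unset Printing Implicit Defensive.
Import GRing.Theory.
Local Open Scope ring_scope.

Section CC.
Variable V : finType.
Variable Rel : {set {set V * V}}.
Hypothesis HC : coherent_configuration Rel.

Lemma cc_part : partition Rel [set: V * V].
Proof. by have [] := HC. Qed.
Lemma cc_tr R : R \in Rel -> transpose R \in Rel.
Proof. by have [_ _ H _] := HC; exact: H. Qed.
Lemma cc_coh R S T : R \in Rel -> S \in Rel -> T \in Rel ->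
  exists c : nat, forall u v, (u, v) \in T -> #|nbhd R u :&: nbhd (transpose S) v| = c.
Proof. by have [_ _ _ H] := HC; exact: H. Qed.

Definition blk (z : V * V) := pblock Rel z.

Lemma blk_mem z : blk z \in Rel.
Proof.
case/and3P: cc_part => /eqP Hc _ _; apply: pblock_mem; by rewrite Hc inE.
Qed.
Lemma blk_in z : z \in blk z.
Proof.
case/and3P: cc_part => /eqP Hc _ _; by rewrite mem_pblock Hc inE.
Qed.
Lemma blk_def T z : T \in Rel -> z \in T -> blk z = T.
Proof.
case/and3P: cc_part => _ Ht _ HT Hz; exact: def_pblock.
Qed.
Lemma set0_nRel : set0 \notin Rel.
Proof. by case/and3P: cc_part. Qed.
Lemma Rel_disj T T' z : T \in Rel -> T' \in Rel -> z \in T -> z \in T' -> T = T'.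
Proof. by move=> HT HT' Hz Hz'; rewrite -(blk_def HT Hz) (blk_def HT' Hz'). Qed.
Lemma transposeK (S : {set V * V}) : transpose (transpose S) = S.
Proof. by apply/setP => -[a b]; rewrite !inE. Qed.
Lemma blk_tr a b : blk (b, a) = transpose (blk (a, b)).
Proof. apply: blk_def; first exact/cc_tr/blk_mem. by rewrite inE blk_in. Qed.

Lemma fiber_fst Z T a b c d : is_fiber Rel Z -> T \in Rel -> (a, b) \in T -> a \in Z ->
  (c, d) \in T -> c \in Z.
Proof.
move=> HZ HT Hab Ha Hcd.
have [k Hk] := cc_coh HZ HT HT.
have E u w : (u, w) \in T -> #|nbhd (diagonal Z) u :&: nbhd (transpose T) w| = (u \in Z).
  move=> Huw.
  case: (boolP (u \in Z)) => Hu.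
    rewrite (_ : _ :&: _ = [set u]) ?cards1 //; apply/setP => z.
    rewrite !inE; apply/andP/eqP => [[/imsetP [x _ [-> _]] _] //|->].
    by split; [apply/imsetP; exists u | ].
  apply/eqP; rewrite cards_eq0; apply/eqP/setP => z; rewrite !inE.
  apply/negbTE; apply/andP => -[/imsetP [x Hx [E1 E2]] _]; move: Hu; by rewrite E1 Hx.
have := Hk _ _ Hab; have := Hk _ _ Hcd; rewrite !E // Ha => <-.
by case: (c \in Z).
Qed.

Lemma fiber_snd W T a b c d : is_fiber Rel W -> T \in Rel -> (a, b) \in T -> b \in W ->
  (c, d) \in T -> d \in W.
Proof.
move=> HW HT Hab Hb Hcd.
have [k Hk] := cc_coh HT HW HT.
have E u w : (u, w) \in T -> #|nbhd T u :&: nbhd (transpose (diagonal W)) w| = (w \in W).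
  move=> Huw.
  case: (boolP (w \in W)) => Hw.
    rewrite (_ : _ :&: _ = [set w]) ?cards1 //; apply/setP => z.
    rewrite !inE; apply/andP/eqP => [[_ /imsetP [x _ [-> _]]] //|->].
    by split => //; apply/imsetP; exists w.
  apply/eqP; rewrite cards_eq0; apply/eqP/setP => z; rewrite !inE.
  apply/negbTE; apply/andP => -[_ /imsetP [x Hx [E1 E2]]]; move: Hw; by rewrite E2 Hx.
have := Hk _ _ Hab; have := Hk _ _ Hcd; rewrite !E // Hb => <-.
by case: (d \in W).
Qed.


Variable F : finFieldType.
Local Notation n := #|V|.
Definition vx (i : 'I_n) : V := enum_val i.
Lemma vx_inj : injective vx.
Proof. exact: enum_val_inj. Qed.
Lemma vxK w : vx (enum_rank w) = w.
Proof. exact: enum_rankK. Qed.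

Lemma sum_vx (R : Type) (idx : R) (op : Monoid.com_law idx) (f : V -> R) :
  \big[op/idx]_(i < n) f (vx i) = \big[op/idx]_(w : V) f w.
Proof.
rewrite [RHS](reindex vx) //; exists enum_rank => x _; [exact: enum_valK | exact: vxK].
Qed.

Definition Amx (S : {set V * V}) : 'M[F]_n := \matrix_(i, j) ((vx i, vx j) \in S)%:R.

Definition bc (M : 'M[F]_n) := forall i j k l,
  blk (vx i, vx j) = blk (vx k, vx l) -> M i j = M k l.

Lemma inS_blk S z : S \in Rel -> (z \in S) = (blk z == S).
Proof.
move=> HS; apply/idP/eqP => [Hz|<-]; [exact: blk_def | exact: blk_in].
Qed.

Lemma bc_Amx S : S \in Rel -> bc (Amx S).
Proof. by move=> HS i j k l E; rewrite !mxE !(inS_blk _ HS) E. Qed.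

Lemma bc0 : bc 0.
Proof. by move=> i j k l _; rewrite !mxE. Qed.
Lemma bc_add M N : bc M -> bc N -> bc (M + N).
Proof. by move=> HM HN i j k l E; rewrite !mxE (HM _ _ _ _ E) (HN _ _ _ _ E). Qed.
Lemma bc_scale a M : bc M -> bc (a *: M).
Proof. by move=> HM i j k l E; rewrite !mxE (HM _ _ _ _ E). Qed.
Lemma bc_opp M : bc M -> bc (- M).
Proof. by move=> HM i j k l E; rewrite !mxE (HM _ _ _ _ E). Qed.
Lemma bc_sum (I : finType) (P : pred I) (f : I -> 'M[F]_n) :
  (forall i, P i -> bc (f i)) -> bc (\sum_(i | P i) f i).
Proof. move=> H; apply: big_ind => //; [exact: bc0 | exact: bc_add]. Qed.

Lemma bc_decomp M : bc M -> exists c : {set V * V} -> F,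
  M = \sum_(S in Rel) c S *: Amx S.
Proof.
move=> HM.
exists (fun S : {set V * V} => if [pick z in S] is Some z then M (enum_rank z.1) (enum_rank z.2) else 0).
apply/matrixP => i j; rewrite summxE (bigD1 (blk (vx i, vx j))) ?blk_mem //=.
rewrite big1 => [|S /andP [HS HSb]]; last first.
  by rewrite !mxE (inS_blk _ HS) eq_sym (negbTE HSb) mulr0.
rewrite addr0 !mxE blk_in mulr1.
case: pickP => [z Hz|H]; last by move: (H (vx i, vx j)); rewrite blk_in.
apply: HM; rewrite !vxK; case: z Hz => a b Hz /=.
by rewrite (blk_def (blk_mem _) Hz).
Qed.

Lemma Amx_mul_entry S T i j :
  (Amx S *m Amx T) i j = #|nbhd S (vx i) :&: nbhd (transpose T) (vx j)|%:R.
Proof.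
rewrite !mxE; under eq_bigr do rewrite !mxE -natrM.
rewrite -natr_sum; congr (_%:R).
rewrite (sum_vx _ (fun w => ((vx i, w) \in S) * ((w, vx j) \in T))%N).
rewrite -sum1_card [RHS]big_mkcond /=; apply: eq_bigr => w _; rewrite !inE.
by case: ((vx i, w) \in S); case: ((w, vx j) \in T).
Qed.

Lemma bc_mulA S T : S \in Rel -> T \in Rel -> bc (Amx S *m Amx T).
Proof.
move=> HS HT i j k l E; rewrite !Amx_mul_entry.
have [c Hc] := cc_coh HS HT (blk_mem (vx i, vx j)).
rewrite (Hc _ _ (blk_in _)) Hc // E; exact: blk_in.
Qed.

Lemma bc_mul M N : bc M -> bc N -> bc (M *m N).
Proof.
move=> /bc_decomp [c ->] /bc_decomp [d ->].
rewrite mulmx_suml; apply: bc_sum => S HS; rewrite -scalemxAl; apply: bc_scale.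
rewrite mulmx_sumr; apply: bc_sum => T HT; rewrite -scalemxAr; apply: bc_scale.
exact: bc_mulA.
Qed.

Lemma bc_tr M : bc M -> bc M^T.
Proof.
move=> HM i j k l E; rewrite !mxE; apply: HM.
by rewrite (blk_tr (vx i) (vx j)) (blk_tr (vx k) (vx l)) E.
Qed.

Lemma trAmx S : (Amx S)^T = Amx (transpose S).
Proof. by apply/matrixP => i j; rewrite !mxE inE. Qed.


Definition rs (Z : {set V}) (M : 'M[F]_n) := forall i j, vx i \notin Z -> M i j = 0.
Definition cs (Z : {set V}) (M : 'M[F]_n) := forall i j, vx j \notin Z -> M i j = 0.

Lemma rs_mul Z M N : rs Z M -> rs Z (M *m N).
Proof. by move=> H i j Hi; rewrite mxE big1 // => k _; rewrite H ?mul0r. Qed.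
Lemma cs_mul Z M N : cs Z N -> cs Z (M *m N).
Proof. by move=> H i j Hj; rewrite mxE big1 // => k _; rewrite H ?mulr0. Qed.
Lemma rs_tr Z M : cs Z M -> rs Z M^T.
Proof. by move=> H i j Hi; rewrite mxE H. Qed.
Lemma cs_tr Z M : rs Z M -> cs Z M^T.
Proof. by move=> H i j Hi; rewrite mxE H. Qed.
Lemma rs_add Z M N : rs Z M -> rs Z N -> rs Z (M + N).
Proof. by move=> H1 H2 i j Hi; rewrite mxE H1 ?H2 ?addr0. Qed.
Lemma cs_add Z M N : cs Z M -> cs Z N -> cs Z (M + N).
Proof. by move=> H1 H2 i j Hi; rewrite mxE H1 ?H2 ?addr0. Qed.
Lemma rs_scale Z a M : rs Z M -> rs Z (a *: M).
Proof. by move=> H1 i j Hi; rewrite mxE H1 ?mulr0. Qed.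
Lemma cs_scale Z a M : cs Z M -> cs Z (a *: M).
Proof. by move=> H1 i j Hi; rewrite mxE H1 ?mulr0. Qed.
Lemma rs_opp Z M : rs Z M -> rs Z (- M).
Proof. by move=> H1 i j Hi; rewrite mxE H1 ?oppr0. Qed.
Lemma cs_opp Z M : cs Z M -> cs Z (- M).
Proof. by move=> H1 i j Hi; rewrite mxE H1 ?oppr0. Qed.

Lemma in_diag (Z : {set V}) a b : ((a, b) \in diagonal Z) = (a == b) && (a \in Z).
Proof.
apply/imsetP/andP => [[x Hx [-> ->]] // | [/eqP -> Hb]]; by exists b.
Qed.

Definition DZ Z := Amx (diagonal Z).

Lemma mulDZr Z M : cs Z M -> M *m DZ Z = M.
Proof.
move=> H; apply/matrixP => i j; rewrite mxE (bigD1 j) //= big1 => [|k Hk].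
  rewrite !mxE in_diag eqxx /=; case: (boolP (vx j \in Z)) => Hj.
    by rewrite mulr1 addr0.
  by rewrite mulr0 addr0 H.
by rewrite !mxE in_diag (inj_eq vx_inj) (negbTE Hk) mulr0.
Qed.

Lemma mulDZl Z M : rs Z M -> DZ Z *m M = M.
Proof.
move=> H; apply/matrixP => i j; rewrite mxE (bigD1 i) //= big1 => [|k Hk].
  rewrite !mxE in_diag eqxx /=; case: (boolP (vx i \in Z)) => Hj.
    by rewrite mul1r addr0.
  by rewrite mul0r addr0 H.
by rewrite !mxE in_diag (inj_eq vx_inj) eq_sym (negbTE Hk) mul0r.
Qed.

Definition one : 'cV[F]_n := const_mx 1.

Lemma Amx_one S i : (Amx S *m one) i 0 = #|nbhd S (vx i)|%:R.
Proof.
rewrite !mxE; under eq_bigr do rewrite !mxE mulr1.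
rewrite -natr_sum; congr (_%:R).
rewrite (sum_vx _ (fun w => nat_of_bool ((vx i, w) \in S))).
by rewrite -sum1_card [RHS]big_mkcond /=; apply: eq_bigr => w _; rewrite !inE.
Qed.

Lemma DZ_one Z i : (DZ Z *m one) i 0 = (vx i \in Z)%:R.
Proof.
rewrite Amx_one; congr (_%:R).
case: (boolP (vx i \in Z)) => Hi.
  rewrite (_ : nbhd _ _ = [set vx i]) ?cards1 //.
  by apply/setP => w; rewrite !inE in_diag Hi andbT eq_sym.
rewrite (_ : nbhd _ _ = set0) ?cards0 //.
by apply/setP => w; rewrite !inE in_diag (negbTE Hi) andbF.
Qed.

Lemma bc_DZ Z : is_fiber Rel Z -> bc (DZ Z).
Proof. exact: bc_Amx. Qed.
Lemma rs_DZ Z : rs Z (DZ Z).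
Proof. by move=> i j Hi; rewrite mxE in_diag (negbTE Hi) andbF. Qed.
Lemma cs_DZ Z : cs Z (DZ Z).
Proof.
move=> i j Hj; rewrite mxE in_diag; case: eqP => // E.
by rewrite E (negbTE Hj).
Qed.


Definition pw (b : 'M[F]_n) m := iter m (mulmx b) 1%:M.
Lemma pwS b m : pw b m.+1 = b *m pw b m.
Proof. by []. Qed.
Lemma pwSr b m : pw b m.+1 = pw b m *m b.
Proof.
elim: m => [|m IH]; first by rewrite /pw /= mulmx1 mul1mx.
by rewrite [LHS]pwS [in LHS]IH mulmxA -pwS.
Qed.
Lemma pwD b x y : pw b (x + y) = pw b x *m pw b y.
Proof.
elim: x => [|x IH]; first by rewrite /pw /= mul1mx.
by rewrite addSn pwS IH mulmxA.
Qed.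

Lemma pw_props Z b : bc b -> rs Z b -> cs Z b -> b *m one = 0 -> forall m,
  [/\ bc (pw b m.+1), rs Z (pw b m.+1), cs Z (pw b m.+1) & pw b m.+1 *m one = 0].
Proof.
move=> Hbc Hrs Hcs H1; elim => [|m [IH1 IH2 IH3 IH4]].
  by rewrite /pw /= mulmx1.
rewrite pwS; split; [exact: bc_mul | exact: rs_mul | exact: cs_mul |].
by rewrite -mulmxA IH4 mulmx0.
Qed.

Local Close Scope ring_scope.
Lemma pw_idem b : exists m, (pw b m.+1 *m pw b m.+1)%R = pw b m.+1.
Proof.
pose f (k : 'I_(#|{: 'M[F]_n}|).+1) := pw b k.
have : ~~ injectiveb f.
  apply/negP => /injectiveP Hf; have := leq_card f Hf; by rewrite card_ord ltnn.
case/injectivePn => x [y Hxy Exy].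
have [i [j [Hij Eij]]] : exists i j : nat, (i < j)%N /\ pw b i = pw b j.
  case: (ltngtP x y) => H; [by exists x, y | by exists y, x | by move: Hxy; rewrite -val_eqE /= H eqxx].
set t := j - i.
have Ht a : (i <= a)%N -> pw b (a + t) = pw b a.
  move=> Ha; rewrite -(subnK Ha) -addnA pwD /t subnKC ?(ltnW Hij) //.
  by rewrite -Eij -pwD.
have Hct c a : (i <= a)%N -> pw b (a + c * t) = pw b a.
  move=> Ha; elim: c => [|c IH]; first by rewrite mul0n addn0.
  by rewrite mulSn (addnC t) addnA Ht ?IH // (leq_trans Ha) ?leq_addr.
exists (i.+1 * t).-1.
have Hpos : (0 < i.+1 * t)%N by rewrite muln_gt0 /= subn_gt0.
rewrite prednK // -pwD Hct //.
by rewrite (leq_trans (leqnSn i)) // -{1}[i.+1]muln1 leq_mul // subn_gt0.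
Qed.

Local Open Scope ring_scope.
Lemma tr_pid r : (r <= n)%N -> \tr (pid_mx r : 'M[F]_n) = r%:R.
Proof.
move=> Hr; rewrite /mxtrace; under eq_bigr do rewrite mxE eqxx /=.
rewrite -natr_sum; congr (_%:R).
rewrite -(big_mkord xpredT (fun i => nat_of_bool (i < r)%N)).
rewrite (big_cat_nat (leq0n r) Hr) /=.
rewrite [X in (X + _)%N](@eq_big_nat _ _ _ _ _ _ (fun _ => 1%N)) => [|k /andP [_ ->] //].
rewrite [X in (_ + X)%N](@eq_big_nat _ _ _ _ _ _ (fun _ => 0%N)) => [|k /andP [Hk _]]; last first.
  by rewrite ltnNge Hk.
by rewrite sum_nat_const_nat big1 // addn0 subn0 muln1.
Qed.

Lemma tr_idem (e : 'M[F]_n) : e *m e = e -> \tr e = (\rank e)%:R.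
Proof.
move=> He.
set L := col_ebase e; set U := row_ebase e; set P := pid_mx (\rank e) : 'M[F]_n.
have HL : L \in unitmx by exact: col_ebase_unit.
have HU : U \in unitmx by exact: row_ebase_unit.
have De : e = L *m P *m U by rewrite mulmx_ebase.
have Hr : (\rank e <= n)%N by exact: rank_leq_row.
have HPP : P *m P = P by exact: pid_mx_id.
have HQ : P *m (U *m L) *m P = P.
  have : L *m (P *m (U *m L) *m P) *m U = L *m P *m U.
    by rewrite -De -{1}He De !mulmxA.
  move/(congr1 (mulmx (invmx L))); rewrite -!mulmxA !mulKmx // => H.
  have := congr1 (mulmx^~ (invmx U)) H; rewrite /= !mulmxA !mulmxK // => <-.
by rewrite {1}De mxtrace_mulC mulmxA mxtrace_mulC -{1}HPP -mulmxA mxtrace_mulC HQ tr_pid.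
Qed.


Lemma rank_cs Z M : cs Z M -> (\rank M <= #|Z|)%N.
Proof.
move=> H.
pose P : 'M[F]_(n, #|Z|) := \matrix_(i, k) (vx i == enum_val k)%:R.
have HD : DZ Z = P *m P^T.
  apply/matrixP => i j; rewrite !mxE.
  under eq_bigr do rewrite !mxE -natrM.
  rewrite -natr_sum -(big_enum_val (fun w => ((vx i == w) * (vx j == w))%N)) /=.
  rewrite in_diag; case: (boolP (vx i \in Z)) => Hi.
    rewrite (bigD1 (vx i)) //= big1 ?addn0 => [|w /andP [_ Hw]]; last by rewrite eq_sym (negbTE Hw).
    by rewrite eqxx mul1n andbT eq_sym.
  rewrite big1 ?andbF // => w Hw; case: eqP => // E; by move: Hi; rewrite E Hw.
rewrite -(mulDZr H) HD mulmxA.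
exact: leq_trans (mxrankM_maxl _ _) (rank_leq_col _).
Qed.

Lemma tr_bc0 Z M : is_fiber Rel Z -> (#|Z|%:R = 0 :> F) -> bc M -> rs Z M -> \tr M = 0.
Proof.
move=> HZ Hp Hbc Hrs.
case: (pickP (fun i => vx i \in Z)) => [i0 Hi0|H0]; last first.
  by rewrite /mxtrace big1 // => i _; rewrite Hrs ?H0.
rewrite /mxtrace (eq_bigr (fun i => (vx i \in Z)%:R * M i0 i0)) => [|i _].
  rewrite -mulr_suml (sum_vx _ (fun w => (w \in Z)%:R)) -natr_sum.
  have -> : (\sum_w (w \in Z : nat))%N = #|Z|.
    by rewrite -sum1_card [RHS]big_mkcond /=; apply: eq_bigr => w _; case: (w \in Z).
  by rewrite Hp mul0r.
case: (boolP (vx i \in Z)) => Hi; last by rewrite mul0r Hrs.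
rewrite mul1r; apply: Hbc.
by rewrite (blk_def HZ (_ : (vx i, vx i) \in _)) ?(blk_def HZ (_ : (vx i0, vx i0) \in _)) // in_diag eqxx.
Qed.

Lemma idem_zero Z e : is_fiber Rel Z -> (#|Z|%:R = 0 :> F) ->
  (forall m, (0 < m < #|Z|)%N -> m%:R != 0 :> F) ->
  e *m e = e -> bc e -> rs Z e -> cs Z e -> e *m one = 0 -> e = 0.
Proof.
move=> HZ Hp Hm He Hbc Hrs Hcs H1.
have Htr := tr_idem He; rewrite (tr_bc0 HZ Hp Hbc Hrs) in Htr.
have Hr := rank_cs Hcs.
case: (posnP (\rank e)) => [/eqP|Hpos]; first by rewrite mxrank_eq0 => /eqP.
have Hr' : \rank e = #|Z|.
  apply/eqP; rewrite eqn_leq Hr /= leqNgt; apply/negP => Hlt.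
  by move: (Hm _ (introT andP (conj Hpos Hlt))); rewrite -Htr eqxx.
have sub : (e <= DZ Z)%MS by rewrite -{1}(mulDZr Hcs) submxMl.
have : (DZ Z <= e)%MS.
  rewrite -(mxrank_leqif_sup sub).2 eqn_leq mxrankS //= Hr'.
  exact: rank_cs (@cs_DZ Z).
case/submxP => D HD.
have [z Hz] : exists z, z \in Z.
  by apply/set0Pn; rewrite -card_gt0 -Hr'.
have := DZ_one Z (enum_rank z); rewrite HD -mulmxA H1 mulmx0 mxE vxK Hz.
by move/eqP; rewrite eq_sym oner_eq0.
Qed.

Lemma nilp Z b : is_fiber Rel Z -> (#|Z|%:R = 0 :> F) ->
  (forall m, (0 < m < #|Z|)%N -> m%:R != 0 :> F) ->
  bc b -> rs Z b -> cs Z b -> b *m one = 0 -> exists m, pw b m = 0.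
Proof.
move=> HZ Hp Hm Hbc Hrs Hcs H1.
have [m Hm'] := pw_idem b.
have [h1 h2 h3 h4] := pw_props Hbc Hrs Hcs H1 m.
by exists m.+1; apply: idem_zero HZ Hp Hm Hm' h1 h2 h3 h4.
Qed.

Lemma inj_left Z b (s : F) a m : s != 0 -> pw b m = 0 -> cs Z a ->
  a *m (s *: DZ Z + b) = 0 -> a = 0.
Proof.
move=> Hs Hb Ha H.
have E : a *m b = (- s) *: a.
  move: H; rewrite mulmxDr -scalemxAr mulDZr // => /eqP; rewrite addrC addr_eq0 => /eqP ->.
  by rewrite scaleNr.
have K k : a *m pw b k = (- s) ^+ k *: a.
  elim: k => [|k IH]; first by rewrite /pw /= mulmx1 expr0 scale1r.
  by rewrite pwSr mulmxA IH -scalemxAl E scalerA exprSr.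
move/eqP: (K m); rewrite Hb mulmx0 eq_sym scaler_eq0 expf_eq0 oppr_eq0 (negbTE Hs) andbF /=.
by move/eqP.
Qed.

Lemma inj_right Z b (s : F) a m : s != 0 -> pw b m = 0 -> rs Z a ->
  (s *: DZ Z + b) *m a = 0 -> a = 0.
Proof.
move=> Hs Hb Ha H.
have E : b *m a = (- s) *: a.
  move: H; rewrite mulmxDl -scalemxAl mulDZl // => /eqP; rewrite addrC addr_eq0 => /eqP ->.
  by rewrite scaleNr.
have K k : pw b k *m a = (- s) ^+ k *: a.
  elim: k => [|k IH]; first by rewrite /pw /= mul1mx expr0 scale1r.
  by rewrite pwS -mulmxA IH -scalemxAr E scalerA exprSr.
move/eqP: (K m); rewrite Hb mul0mx eq_sym scaler_eq0 expf_eq0 oppr_eq0 (negbTE Hs) andbF /=.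
by move/eqP.
Qed.


Definition spc (Z W : {set V}) : {set 'M[F]_n} :=
  [set M : 'M[F]_n | [&& [forall i, forall j, forall k, forall l,
     (blk (vx i, vx j) == blk (vx k, vx l)) ==> (M i j == M k l)],
   [forall i, forall j, (vx i \notin Z) ==> (M i j == 0)] &
   [forall i, forall j, (vx j \notin W) ==> (M i j == 0)]]].

Lemma spcP Z W M : reflect [/\ bc M, rs Z M & cs W M] (M \in spc Z W).
Proof.
rewrite inE; apply: (iffP and3P) => [[/forallP H1 /forallP H2 /forallP H3] | [H1 H2 H3]].
  split.
  - move=> i j k l E; move/forallP: (H1 i) => /(_ j) /forallP /(_ k) /forallP /(_ l).
    by rewrite E eqxx => /implyP /(_ isT) /eqP.
  - by move=> i j Hi; move/forallP: (H2 i) => /(_ j) /implyP /(_ Hi) /eqP.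
  - by move=> i j Hj; move/forallP: (H3 i) => /(_ j) /implyP /(_ Hj) /eqP.
split.
- apply/forallP => i; apply/forallP => j; apply/forallP => k; apply/forallP => l.
  by apply/implyP => /eqP E; rewrite (H1 _ _ _ _ E).
- by apply/forallP => i; apply/forallP => j; apply/implyP => Hi; rewrite H2.
- by apply/forallP => i; apply/forallP => j; apply/implyP => Hj; rewrite H3.
Qed.

Lemma blk_D Z W a b : is_fiber Rel Z -> is_fiber Rel W ->
  (blk (a, b) \in rels_between Rel Z W) = (a \in Z) && (b \in W).
Proof.
move=> HZ HW; rewrite inE blk_mem /=.
apply/subsetP/andP => [H | [Ha Hb] [c d] Hcd].
  by move: (H _ (blk_in (a, b))); rewrite inE /= => /andP.
rewrite inE /=; apply/andP; split.
  exact: fiber_fst HZ (blk_mem _) (blk_in (a, b)) Ha Hcd.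
exact: fiber_snd HW (blk_mem _) (blk_in (a, b)) Hb Hcd.
Qed.

Lemma pffunP0 (D : {set {set V * V}}) (f : {ffun {set V * V} -> F}) :
  reflect (forall U, U \notin D -> f U = 0) (f \in pffun_on 0 D [set: F]).
Proof.
apply: (iffP pffun_onP) => [[/subsetP H _] U HU | H].
  by apply/eqP; apply: contraNT HU => Hf; apply: H; rewrite inE.
split; last by move=> y _; rewrite inE.
by apply/subsetP => U; rewrite inE; apply: contraR => HU; rewrite H ?eqxx.
Qed.

Lemma card_spc Z W : is_fiber Rel Z -> is_fiber Rel W ->
  #|spc Z W| = (#|F| ^ #|rels_between Rel Z W|)%N.
Proof.
move=> HZ HW.
set D := rels_between Rel Z W.
pose mxf (f : {ffun {set V * V} -> F}) : 'M[F]_n := \matrix_(i, j) f (blk (vx i, vx j)).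
have Hin f : f \in pffun_on 0 D [set: F] -> mxf f \in spc Z W.
  move/pffunP0 => Hf; apply/spcP; split.
  - by move=> i j k l E; rewrite !mxE E.
  - by move=> i j Hi; rewrite mxE Hf // blk_D // (negbTE Hi).
  - by move=> i j Hj; rewrite mxE Hf // blk_D // (negbTE Hj) andbF.
have Hinj : {in pffun_on 0 D [set: F] &, injective mxf}.
  move=> f g /pffunP0 Hf /pffunP0 Hg E; apply/ffunP => U.
  case: (boolP (U \in D)) => HU; last by rewrite Hf ?Hg.
  have HUR : U \in Rel by move: HU; rewrite inE => /andP [].
  have [z Hz] : exists z, z \in U.
    apply/set0Pn; apply: contraNneq set0_nRel => E0; by rewrite -E0.
  have := congr1 (fun M : 'M[F]_n => M (enum_rank z.1) (enum_rank z.2)) E.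
  by rewrite /= !mxE !vxK -surjective_pairing (blk_def HUR Hz).
have -> : #|F| = #|[set: F]| by rewrite cardsT.
rewrite -(card_pffun_on 0) -(card_in_imset Hinj).
suff -> : spc Z W = mxf @: pffun_on 0 D [set: F] by [].
apply/eqP; rewrite eqEsubset; apply/andP; split; last first.
  by apply/subsetP => M /imsetP [f Hf ->]; exact: Hin.
apply/subsetP => M /spcP [H1 H2 H3]; apply/imsetP.
exists [ffun U => if U \in D then
          (if [pick z in U] is Some z then M (enum_rank z.1) (enum_rank z.2) else 0) else 0].
  by apply/pffunP0 => U HU; rewrite ffunE (negbTE HU).
apply/matrixP => i j; rewrite !mxE ffunE.
case: (boolP (blk (vx i, vx j) \in D)) => HD.
  case: pickP => [z Hz | H]; last by move: (H (vx i, vx j)); rewrite blk_in.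
  apply: H1; rewrite !vxK -surjective_pairing.
  by rewrite (blk_def (blk_mem _) Hz).
move: HD; rewrite blk_D // negb_and => /orP [Hi | Hj]; [exact: H2 | exact: H3].
Qed.


Lemma val_const R Z : R \in Rel -> is_fiber Rel Z ->
  exists k, forall u, u \in Z -> #|nbhd R u| = k.
Proof.
move=> HR HZ; have [c Hc] := cc_coh HR (cc_tr HR) HZ.
exists c => u Hu; rewrite -(Hc u u); last by rewrite in_diag eqxx.
by rewrite transposeK setIid.
Qed.

Lemma Amx_supp (R : {set V * V}) (Z W : {set V}) : R \subset setX Z W -> rs Z (Amx R) /\ cs W (Amx R).
Proof.
move/subsetP => H; split => i j Hij; rewrite mxE;
  case: (boolP ((vx i, vx j) \in R)) => // /H; rewrite inE /= => /andP [? ?].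
  by move: Hij; rewrite (_ : vx i \in Z).
by move: Hij; rewrite (_ : vx j \in W).
Qed.

Lemma Amx_one_const (R : {set V * V}) (Z W : {set V}) k : R \subset setX Z W ->
  (forall u, u \in Z -> #|nbhd R u| = k) -> Amx R *m one = k%:R *: (DZ Z *m one).
Proof.
move=> HRs Hk; apply/matrixP => i j; rewrite (ord1 j) Amx_one mxE DZ_one.
case: (boolP (vx i \in Z)) => Hi; first by rewrite Hk // mulr1.
rewrite mulr0 (_ : nbhd R (vx i) = set0) ?cards0 //.
apply/setP => w; rewrite !inE; apply/negbTE; apply: contra Hi => Hw.
by move/subsetP: HRs => /(_ _ Hw); rewrite inE => /andP [].
Qed.

Lemma card_inj (A B : {set 'M[F]_n}) (f : 'M[F]_n -> 'M[F]_n) :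
  (forall a, a \in A -> f a \in B) -> {in A &, injective f} -> (#|A| <= #|B|)%N.
Proof.
move=> H Hi; rewrite -(card_in_imset Hi); apply: subset_leq_card.
by apply/subsetP => _ /imsetP [a Ha ->]; exact: H.
Qed.

Lemma spc_sub Z W a a' : a \in spc Z W -> a' \in spc Z W -> a - a' \in spc Z W.
Proof.
move=> /spcP [h1 h2 h3] /spcP [g1 g2 g3]; apply/spcP; split.
- exact: bc_add h1 (bc_opp g1).
- exact: rs_add h2 (rs_opp g2).
- exact: cs_add h3 (cs_opp g3).
Qed.

Lemma eq_of_sub0 (a a' : 'M[F]_n) : a - a' = 0 -> a = a'.
Proof. by move/eqP; rewrite subr_eq0 => /eqP. Qed.


Lemma main_eq X Y : is_fiber Rel X -> is_fiber Rel Y -> #|X| = #|Y| ->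
  (#|X|%:R = 0 :> F) -> (forall m, (0 < m < #|X|)%N -> m%:R != 0 :> F) -> (1 < #|F|)%N ->
  (1 < #|rels_between Rel X Y|)%N ->
  #|rels_between Rel X Y| = #|rels_between Rel X X| /\
  #|rels_between Rel X X| = #|rels_between Rel Y Y|.
Proof.
move=> HX HY EXY Hp Hm HF /card_gt1P [R [R2 [HR HR2 HRR2]]].
have HpY : #|Y|%:R = 0 :> F by rewrite -EXY.
have HmY : forall m, (0 < m < #|Y|)%N -> m%:R != 0 :> F by rewrite -EXY.
move: (HR) (HR2); rewrite !inE => /andP [HRr HRs] /andP [HR2r HR2s].
have [Nrs Ncs] := Amx_supp HRs.
have [k Hk] := val_const HRr HX.
have HRts : transpose R \subset setX Y X.
  apply/subsetP => -[a b]; rewrite inE /= => /(subsetP HRs); by rewrite !inE /= andbC.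
have [k' Hk'] := val_const (cc_tr HRr) HY.
have [[x1 y1] H1] : exists z, z \in R.
  by apply/set0Pn; apply: contraNneq set0_nRel => E0; rewrite -E0.
have [[x2 y2] H2] : exists z, z \in R2.
  by apply/set0Pn; apply: contraNneq set0_nRel => E0; rewrite -E0.
have /andP [Hx1 Hy1] : (x1 \in X) && (y1 \in Y).
  by move/subsetP: HRs => /(_ _ H1); rewrite inE.
have /andP [Hx2 Hy2] : (x2 \in X) && (y2 \in Y).
  by move/subsetP: HR2s => /(_ _ H2); rewrite inE.
have H2n : (x2, y2) \notin R.
  by apply/negP => H2R; move/eqP: HRR2; apply; exact: Rel_disj HRr HR2r H2R H2.
have Hkb : (0 < k < #|X|)%N.
  rewrite -(Hk _ Hx1) card_gt0 EXY; apply/andP; split.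
    by apply/set0Pn; exists y1; rewrite inE.
  rewrite (Hk _ Hx1) -(Hk _ Hx2); apply: proper_card; apply/properP; split.
    by apply/subsetP => w; rewrite inE => /(subsetP HRs); rewrite inE => /andP [].
  by exists y2; rewrite // inE.
have Hk'b : (0 < k' < #|X|)%N.
  rewrite -(Hk' _ Hy1) card_gt0; apply/andP; split.
    by apply/set0Pn; exists x1; rewrite !inE.
  rewrite (Hk' _ Hy1) -(Hk' _ Hy2); apply: proper_card; apply/properP; split.
    by apply/subsetP => w; rewrite !inE => /(subsetP HRs); rewrite inE => /andP [].
  by exists x2; rewrite // !inE.
set N := Amx R.
set s := (k * k')%:R : F.
have Hs : s != 0 by rewrite /s natrM mulf_neq0 // Hm.
have N1 : N *m one = k%:R *: (DZ X *m one) by exact: Amx_one_const HRs Hk.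
have Nt1 : N^T *m one = k'%:R *: (DZ Y *m one).
  by rewrite /N trAmx; exact: Amx_one_const HRts Hk'.
have NbC : bc N := bc_Amx HRr.
set G := N *m N^T.
set b := G - s *: DZ X.
have HG : G = s *: DZ X + b by rewrite /b addrC subrK.
have bbc : bc b := bc_add (bc_mul NbC (bc_tr NbC)) (bc_opp (bc_scale s (bc_DZ HX))).
have brs : rs X b := rs_add (rs_mul _ Nrs) (rs_opp (rs_scale s (@rs_DZ X))).
have bcs : cs X b := cs_add (cs_mul _ (cs_tr Nrs)) (cs_opp (cs_scale s (@cs_DZ X))).
have b1 : b *m one = 0.
  rewrite /b mulmxBl /G -mulmxA Nt1 -scalemxAr mulmxA mulDZr // N1 scalerA -scalemxAl.
  by rewrite /s natrM mulrC subrr.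
have [mb Hmb] := nilp HX Hp Hm bbc brs bcs b1.
set G' := N^T *m N.
set b' := G' - s *: DZ Y.
have HG' : G' = s *: DZ Y + b' by rewrite /b' addrC subrK.
have b'bc : bc b' := bc_add (bc_mul (bc_tr NbC) NbC) (bc_opp (bc_scale s (bc_DZ HY))).
have b'rs : rs Y b' := rs_add (rs_mul _ (rs_tr Ncs)) (rs_opp (rs_scale s (@rs_DZ Y))).
have b'cs : cs Y b' := cs_add (cs_mul _ Ncs) (cs_opp (cs_scale s (@cs_DZ Y))).
have b'1 : b' *m one = 0.
  rewrite /b' mulmxBl /G' -mulmxA N1 -scalemxAr mulmxA (mulDZr (cs_tr Nrs)) Nt1.
  by rewrite scalerA -scalemxAl /s natrM subrr.
have [mb' Hmb'] := nilp HY HpY HmY b'bc b'rs b'cs b'1.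
have I1 : (#|spc X X| <= #|spc X Y|)%N.
  apply: (@card_inj _ _ (fun a => a *m N)).
    move=> a /spcP [h1 h2 h3]; apply/spcP; split; [exact: bc_mul | exact: rs_mul | exact: cs_mul].
  move=> a a' Ha Ha' /= E; apply: eq_of_sub0.
  have /spcP [_ _ h3] := spc_sub Ha Ha'.
  by apply: (inj_left Hs Hmb h3); rewrite -HG /G mulmxA mulmxBl E subrr mul0mx.
have I2 : (#|spc X Y| <= #|spc X X|)%N.
  apply: (@card_inj _ _ (fun a => a *m N^T)).
    move=> a /spcP [h1 h2 h3]; apply/spcP; split.
    - exact: bc_mul h1 (bc_tr NbC).
    - exact: rs_mul.
    - exact: cs_mul (cs_tr Nrs).
  move=> a a' Ha Ha' /= E; apply: eq_of_sub0.
  have /spcP [_ _ h3] := spc_sub Ha Ha'.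
  by apply: (inj_left Hs Hmb' h3); rewrite -HG' /G' mulmxA mulmxBl E subrr mul0mx.
have I3 : (#|spc Y Y| <= #|spc X Y|)%N.
  apply: (@card_inj _ _ (fun a => N *m a)).
    move=> a /spcP [h1 h2 h3]; apply/spcP; split.
    - exact: bc_mul NbC h1.
    - exact: rs_mul.
    - exact: cs_mul.
  move=> a a' Ha Ha' /= E; apply: eq_of_sub0.
  have /spcP [_ h2 _] := spc_sub Ha Ha'.
  by apply: (inj_right Hs Hmb' h2); rewrite -HG' /G' -mulmxA mulmxBr E subrr mulmx0.
have I4 : (#|spc X Y| <= #|spc Y Y|)%N.
  apply: (@card_inj _ _ (fun a => N^T *m a)).
    move=> a /spcP [h1 h2 h3]; apply/spcP; split.
    - exact: bc_mul (bc_tr NbC) h1.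
    - exact: rs_mul (rs_tr Ncs).
    - exact: cs_mul.
  move=> a a' Ha Ha' /= E; apply: eq_of_sub0.
  have /spcP [_ h2 _] := spc_sub Ha Ha'.
  by apply: (inj_right Hs Hmb h2); rewrite -HG /G -mulmxA mulmxBr E subrr mulmx0.
rewrite !card_spc // !leq_exp2l // in I1 I2 I3 I4.
have E1 : #|rels_between Rel X Y| = #|rels_between Rel X X| by apply/eqP; rewrite eqn_leq I1 I2.
split => //; rewrite -E1; apply/eqP; by rewrite eqn_leq I3 I4.
Qed.

End CC.

Local Close Scope ring_scope.

Theorem corollary2p5 (V : finType) (Rel : {set {set V * V}}) (X Y : {set V}) :
  coherent_configuration Rel ->
  is_fiber Rel X -> is_fiber Rel Y ->
  #|X| = #|Y| -> prime #|X| ->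
  (#|rels_between Rel X Y| = 1 \/
   #|rels_between Rel X Y| = #|rels_between Rel X X|) /\
  (1 < #|rels_between Rel X Y| ->
   #|rels_between Rel X Y| = #|rels_between Rel X X| /\
   #|rels_between Rel X X| = #|rels_between Rel Y Y|).
Proof.
move=> HC HX HY EXY Hpr.
have Hp : (#|X|%:R = 0 :> 'F_#|X|)%R by exact: pchar_Fp_0.
have Hm : forall m, (0 < m < #|X|)%N -> (m%:R != 0 :> 'F_#|X|)%R.
  move=> m /andP [H0 H1]; apply/eqP => E; have := val_Fp_nat Hpr m; rewrite E modn_small //=.
  by move=> E0; move: H0; rewrite -E0.
have HF : (1 < #|'F_#|X| |)%N by rewrite card_Fp // prime_gt1.
have main := @main_eq V Rel HC 'F_#|X| X Y HX HY EXY Hp Hm HF.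
split; last exact: main.
have Hpos : 0 < #|rels_between Rel X Y|.
  have [x Hx] : exists x, x \in X by apply/set0Pn; rewrite -card_gt0 prime_gt0.
  have [y Hy] : exists y, y \in Y by apply/set0Pn; rewrite -card_gt0 -EXY prime_gt0.
  apply/card_gt0P; exists (blk Rel (x, y)); by rewrite blk_D // Hx Hy.
case: (ltngtP #|rels_between Rel X Y| 1) => H.
- by move: Hpos; rewrite lt0n -leqn0 -ltnS H.
- by right; case: (main H).
- by left.
Qed.
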